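(* Let $\Gamma$ be a group and $S$ a $\Gamma$-graded inverse semigroup. Then $S$ is $0$-$E$-unitary if and only if the inverse semigroup $S_\varepsilon$ is $0$-$E$-unitary.
   Context: Semigroups have a zero; $S$ is $\Gamma$-graded via $\deg:S\setminus\{0\}\to\Gamma$ with $\deg(st)=\deg(s)\deg(t)$ whenever $st\neq0$; $S_\alpha=\deg^{-1}(\alpha)\cup\{0\}$; $\varepsilon$ is the identity of $\Gamma$. $E(S)$ is the set of idempotents. The natural partial order on an inverse semigroup: $s\le t$ iff $s=tu$ for some $u\in E(S)$. An inverse semigroup $S$ with zero is $0$-$E$-unitary if for all $s\in S$ and $u\in E(S)\setminus\{0\}$ with $u\le s$, one has $s\in E(S)$. *)

(* Defs.v *)
Record Group := {
  g_car :> Type;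
  g_mul : g_car -> g_car -> g_car;
  g_one : g_car;
  g_inv : g_car -> g_car;
  g_assoc : forall a b c, g_mul a (g_mul b c) = g_mul (g_mul a b) c;
  g_one_l : forall a, g_mul g_one a = a;
  g_inv_l : forall a, g_mul (g_inv a) a = g_one
}.

Record InvSemigroup0 := {
  s_car :> Type;
  s_mul : s_car -> s_car -> s_car;
  s_zero : s_car;
  s_assoc : forall a b c, s_mul a (s_mul b c) = s_mul (s_mul a b) c;
  s_zero_l : forall a, s_mul s_zero a = s_zero;
  s_zero_r : forall a, s_mul a s_zero = s_zero;
  s_inverse : forall s, exists! t, s_mul (s_mul s t) s = s /\ s_mul (s_mul t s) t = t
}.

(* deg : S \ {0} -> Gamma, represented as a total function whose value at 0 is
   irrelevant; deg (s t) = deg s deg t whenever s t <> 0. *)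
Definition is_grading (G : Group) (S : InvSemigroup0) (deg : S -> G) : Prop :=
  forall s t : S, s_mul S s t <> s_zero S ->
    deg (s_mul S s t) = g_mul G (deg s) (deg t).

Definition homog (G : Group) (S : InvSemigroup0) (deg : S -> G) (a : G) (s : S) : Prop :=
  s = s_zero S \/ (s <> s_zero S /\ deg s = a).

Definition idempotent (S : InvSemigroup0) (e : S) : Prop := s_mul S e e = e.

(* 0-E-unitarity of the inverse subsemigroup of S carried by the predicate P
   (elements, idempotents and natural partial order all taken inside P):
   s <= t in P iff s = t u for some idempotent u in P. *)
Definition zeroEunitary_on (S : InvSemigroup0) (P : S -> Prop) : Prop :=
  forall s u : S, P s -> P u -> idempotent S u -> u <> s_zero S ->
    (exists v : S, P v /\ idempotent S v /\ u = s_mul S s v) ->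
    idempotent S s.

Definition zeroEunitary (S : InvSemigroup0) : Prop :=
  zeroEunitary_on S (fun _ => True).

(* Main.v *)
Require Import Defs.

Lemma g_cancel (G : Group) (a b c : G) : g_mul G a b = g_mul G a c -> b = c.
Proof.
  intro H. rewrite <- (g_one_l G b), <- (g_one_l G c), <- (g_inv_l G a).
  rewrite <- !g_assoc, H. reflexivity.
Qed.

Lemma g_one_r (G : Group) (a : G) : g_mul G a (g_one G) = a.
Proof.
  apply (g_cancel G (g_inv G a)). rewrite g_assoc, g_inv_l, g_one_l. reflexivity.
Qed.

Lemma g_idem (G : Group) (a : G) : g_mul G a a = a -> a = g_one G.
Proof.
  intro H. apply (g_cancel G a). rewrite H, g_one_r. reflexivity.
Qed.

Theorem proposition2p6 (G : Group) (S : InvSemigroup0) (deg : S -> G)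
  (Hdeg : is_grading G S deg) :
  zeroEunitary S <-> zeroEunitary_on S (homog G S deg (g_one G)).
Proof.
  split.
  - intros H s u _ _ Hu Hu0 [v [_ [Hv Huv]]].
    apply (H s u I I Hu Hu0). exists v. split; [exact I|]. split; assumption.
  - intros H s u _ _ Hu Hu0 [v [_ [Hv Huv]]].
    assert (Hs0 : s <> s_zero S).
    { intro E. apply Hu0. rewrite Huv, E. apply s_zero_l. }
    assert (Hv0 : v <> s_zero S).
    { intro E. apply Hu0. rewrite Huv, E. apply s_zero_r. }
    assert (Hid : forall e, idempotent S e -> e <> s_zero S -> deg e = g_one G).
    { intros e He He0. apply g_idem. unfold idempotent in He.
      rewrite <- (Hdeg e e) by (rewrite He; exact He0). rewrite He. reflexivity. }
    assert (Hds : deg s = g_one G).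
    { pose proof (Hdeg s v) as E. rewrite <- Huv in E. specialize (E Hu0).
      rewrite (Hid u Hu Hu0), (Hid v Hv Hv0), g_one_r in E. symmetry; exact E. }
    apply (H s u).
    + right; split; assumption.
    + right; split; [assumption| apply Hid; assumption].
    + assumption.
    + assumption.
    + exists v. split; [right; split; [assumption| apply Hid; assumption]|].
      split; assumption.
Qed.
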